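(* Let $G=(V,E)$ be a connected simple graph with a set-valued metric $\Omega(-,-)$ taking values in subsets of a finite set $\Omega$, and let $v\mapsto -v$ be an involution on $V$ which is both equivariant and a graph automorphism of $G$. If $V$ contains an $\Omega$-accessible vertex $x_0$, then the diameter of $G$ is exactly $|\Omega|$.
   Context: For a connected simple graph $G=(V,E)$ and a set $\Omega$, a set-valued metric on $G$ is a function $\Omega(-,-):V\times V\to 2^{\Omega}$ such that $\Omega(x,y)=\Omega(y,x)$ for all $x,y$; $|\Omega(x,y)|=1$ whenever $\{x,y\}\in E$; and $\Omega(x,z)=\Omega(x,y)\triangle\Omega(y,z)$ for all $x,y,z$, where $\triangle$ is symmetric difference. An involution $x\mapsto -x$ on $V$ is equivariant if $\Omega(x,-y)=\Omega\setminus\Omega(x,y)$ for all $x,y$; it is a graph automorphism if it maps edges to edges. A vertex $x_0$ is $\Omega$-accessible if $d_G(x_0,y)=|\Omega(x_0,y)|$ for every $y\in V$, where $d_G$ is graph distance. *)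

(* Defs.v *)
From mathcomp Require Import all_boot.
Set Implicit Arguments. Unset Strict Implicit. Unset Printing Implicit Defensive.

Definition simple_graph (V : Type) (adj : V -> V -> Prop) : Prop :=
  (forall x y, adj x y -> adj y x) /\ (forall x, ~ adj x x).

Inductive walk (V : Type) (adj : V -> V -> Prop) : V -> V -> nat -> Prop :=
| walk0 x : walk adj x x 0
| walkS x y z n : adj x y -> walk adj y z n -> walk adj x z n.+1.

Definition connected (V : Type) (adj : V -> V -> Prop) : Prop :=
  forall x y, exists n, walk adj x y n.

Definition gdist (V : Type) (adj : V -> V -> Prop) (x y : V) (n : nat) : Prop :=
  walk adj x y n /\ forall m, walk adj x y m -> n <= m.

Definition diameter_is (V : Type) (adj : V -> V -> Prop) (D : nat) : Prop :=
  (forall x y n, gdist adj x y n -> n <= D) /\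
  (exists x y, gdist adj x y D).

Definition set_valued_metric (V : Type) (O : finType) (adj : V -> V -> Prop)
    (Om : V -> V -> {set O}) : Prop :=
  (forall x y, Om x y = Om y x) /\
  (forall x y, adj x y -> #|Om x y| = 1) /\
  (forall x y z, Om x z = (Om x y :\: Om y z) :|: (Om y z :\: Om x y)).

Definition involution (V : Type) (neg : V -> V) : Prop :=
  forall x, neg (neg x) = x.

Definition equivariant (V : Type) (O : finType) (Om : V -> V -> {set O})
    (neg : V -> V) : Prop :=
  forall x y, Om x (neg y) = ~: Om x y.

Definition graph_automorphism (V : Type) (adj : V -> V -> Prop) (neg : V -> V) : Prop :=
  forall x y, adj x y -> adj (neg x) (neg y).

Definition accessible (V : Type) (O : finType) (adj : V -> V -> Prop)
    (Om : V -> V -> {set O}) (x0 : V) : Prop :=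
  forall y, gdist adj x0 y #|Om x0 y|.

(* Main.v *)
Require Import Defs.
From mathcomp Require Import all_boot.
Set Implicit Arguments. Unset Strict Implicit.

Lemma walk_cat (V : Type) (adj : V -> V -> Prop) x y z m n :
  walk adj x y m -> walk adj y z n -> walk adj x z (m + n).
Proof.
elim=> [//|a b c k Hab _ IH] H; rewrite addSn; exact: walkS (IH H).
Qed.

Lemma walk_rev (V : Type) (adj : V -> V -> Prop) x y n :
  (forall x y, adj x y -> adj y x) -> walk adj x y n -> walk adj y x n.
Proof.
move=> S; elim=> [a|a b c k Hab _ IH]; first exact: walk0.
rewrite -addn1; apply: walk_cat IH _; apply: walkS (S _ _ Hab) (walk0 _ _).
Qed.

Lemma walk_map (V : Type) (adj : V -> V -> Prop) f x y n :
  (forall x y, adj x y -> adj (f x) (f y)) -> walk adj x y n -> walk adj (f x) (f y) n.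
Proof.
move=> H; elim=> [a|a b c k Hab _ IH]; first exact: walk0.
exact: walkS (H _ _ Hab) IH.
Qed.

Theorem proposition3p12 (V : Type) (O : finType) (adj : V -> V -> Prop)
    (Om : V -> V -> {set O}) (neg : V -> V) :
  simple_graph adj -> connected adj ->
  set_valued_metric adj Om ->
  involution neg -> equivariant Om neg -> graph_automorphism adj neg ->
  (exists x0, accessible adj Om x0) ->
  diameter_is adj #|O|.
Proof.
move=> [S _] _ [Sym [_ Tri]] Inv Eq Aut [x0 Acc].
have card_c : forall y, #|Om x0 (neg y)| = #|O| - #|Om x0 y|.
  by move=> y; rewrite Eq cardsCs setCK.
have le_c : forall y, #|Om x0 y| <= #|O| by move=> y; apply: max_card.
split.
- move=> x y n [_ Hmin].
  have W1 : walk adj x y (#|Om x0 x| + #|Om x0 y|).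
    exact: (walk_cat (walk_rev S (Acc x).1) (Acc y).1).
  have W2 : walk adj x y (#|Om x0 (neg x)| + #|Om x0 (neg y)|).
    have A1 : walk adj (neg x0) x #|Om x0 (neg x)|.
      by have := walk_map Aut (Acc (neg x)).1; rewrite Inv.
    have A2 : walk adj (neg x0) y #|Om x0 (neg y)|.
      by have := walk_map Aut (Acc (neg y)).1; rewrite Inv.
    exact: (walk_cat (walk_rev S A1) A2).
  have h1 := Hmin _ W1; have h2 := Hmin _ W2.
  rewrite !card_c in h2.
  have := le_c x; have := le_c y.
  move: h1 h2; set a := #|Om x0 x|; set b := #|Om x0 y|.
  move=> h1 h2 hb ha.
  have : n + n <= #|O| + #|O|.
    apply: leq_trans (leq_add h1 h2) _.
    by rewrite addnACA subnKC // subnKC.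
  by rewrite !addnn leq_double.
- exists x0, (neg x0).
  have := Acc (neg x0); rewrite card_c.
  have -> : Om x0 x0 = set0.
    by rewrite (Tri x0 x0 x0) setDv setU0.
  by rewrite cards0 subn0.
Qed.
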